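(* Let $\mu,\nu$ be Borel probability measures on $\mathbb R$ such that $\operatorname{diam}\operatorname{supp}\mu=\operatorname{diam}\operatorname{supp}\nu<\infty$ and $\mu\prec\nu$. Then the mm-spaces $(\mathbb R,|\cdot|,\mu)$ and $(\mathbb R,|\cdot|,\nu)$ are mm-isomorphic.
   Context: An mm-space is a triple $(X,d_X,\mu_X)$ where $(X,d_X)$ is a complete separable metric space and $\mu_X$ is a Borel probability measure. Two mm-spaces $X,Y$ are mm-isomorphic if there is an isometry $f:\operatorname{supp}\mu_X\to\operatorname{supp}\mu_Y$ with $f_*\mu_X=\mu_Y$. For mm-spaces, $Y\prec X$ if there is a 1-Lipschitz map $f:\operatorname{supp}\mu_X\to\operatorname{supp}\mu_Y$ with $f_*\mu_X=\mu_Y$. For Borel probability measures $\mu,\nu$ on $\mathbb R$, $\mu\prec\nu$ means $(\mathbb R,|\cdot|,\mu)\prec(\mathbb R,|\cdot|,\nu)$. The diameter of a set $A$ is $\sup_{x,y\in A}|x-y|$. *)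

(* Defs.v *)
(* Borel probability measures on R are
   [probability R R], where the canonical sigma-algebra on a realType R
   is the Borel one (generated by the half-open intervals). *)
From HB Require Import structures.
From mathcomp Require Import all_boot all_order all_algebra.
From mathcomp Require Import all_classical all_reals all_analysis.
Set Implicit Arguments. Unset Strict Implicit. Unset Printing Implicit Defensive.
Import Order.TTheory GRing.Theory Num.Theory.
Import numFieldTopology.Exports numFieldNormedType.Exports.
Local Open Scope classical_set_scope.
Local Open Scope ring_scope.

Definition supp (R : realType) (mu : probability R R) : set R :=
  [set x : R | forall U : set R, open U -> U x -> (0 < mu U)%E].

Definition diam (R : realType) (A : set R) : \bar R :=
  ereal_sup [set (`|x - y|)%:E | x in A & y in A].

(* f restricted to supp nu pushes nu forward to mu (f defined on supp nu;
   its values outside supp nu are irrelevant) *)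
Definition pushes_on (R : realType) (f : R -> R) (nu mu : probability R R) :=
  forall A : set R, measurable A ->
    measurable (supp nu `&` f @^-1` A) /\ nu (supp nu `&` f @^-1` A) = mu A.

(* mu ≺ nu : (R,|.|,mu) ≺ (R,|.|,nu), i.e. there is a 1-Lipschitz map
   f : supp nu -> supp mu with f_* nu = mu *)
Definition dominated (R : realType) (mu nu : probability R R) : Prop :=
  exists f : R -> R,
    [/\ (forall x, supp nu x -> supp mu (f x)),
        (forall x y, supp nu x -> supp nu y -> `|f x - f y| <= `|x - y|)
      & pushes_on f nu mu].

Definition mm_isomorphic (R : realType) (mu nu : probability R R) : Prop :=
  exists f : R -> R,
    [/\ (forall x, supp mu x -> supp nu (f x)),
        (forall x y, supp mu x -> supp mu y -> `|f x - f y| = `|x - y|)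
      & pushes_on f mu nu].

(* Main.v *)
Require Import Defs.
From HB Require Import structures.
From mathcomp Require Import all_boot all_order all_algebra.
From mathcomp Require Import all_classical all_reals all_analysis.
From mathcomp Require Import ring lra measurable_realfun.
Import Order.TTheory GRing.Theory Num.Theory.
Import numFieldTopology.Exports numFieldNormedType.Exports.
Set Implicit Arguments. Unset Strict Implicit.
Local Open Scope classical_set_scope.
Local Open Scope ring_scope.

Lemma supp_closed (R : realType) (P : probability R R) : closed (supp P).
Proof.
move=> x clx U oU Ux.
have [s [Ss Us]] := clx U (open_nbhs_nbhs (conj oU Ux)).
exact: Ss U oU Us.
Qed.

Lemma supp_meas (R : realType) (P : probability R R) : measurable (supp P).
Proof. apply: closed_measurable; exact: supp_closed. Qed.

Lemma full_meas (R : realType) (P : probability R R) (S A : set R) :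
  measurable S -> P S = 1%E -> measurable A -> P (S `&` A) = P A.
Proof.
move=> mS PS mA.
have h0 : P (A `\` S) = 0%E.
  apply: (subset_measure0 (B := ~` S)).
  - exact: measurableD.
  - exact: measurableC.
  - by move=> z [].
  move: (probability_setC P mS); rewrite PS subee // => hh; exact: hh.
move: (measureDI P mA mS) => /= ->.
by rewrite h0 add0e setIC.
Qed.

Lemma ext_supp (R : realType) (P : probability R R) :
  (diam (supp P) < +oo)%E -> P (supp P) = 1%E ->
  exists a b, [/\ supp P a, supp P b, (forall x, supp P x -> a <= x <= b)
     & diam (supp P) = (b - a)%:E].
Proof.
move=> hd P1.
set S := supp P in hd P1 *.
have [s0 Ss0] : S !=set0.
  apply/set0P/negP => /eqP S0.
  move: P1; rewrite S0 measure0 => /esym/eqP; rewrite onee_eq0 //.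
have mem x y : S x -> S y -> (`|x - y|%:E <= diam S)%E.
  by move=> Sx Sy; apply: ereal_sup_ubound; exists x => //; exists y.
have [r hr] : exists r, diam S = r%:E.
  move: hd (mem s0 s0 Ss0 Ss0); case: (diam S) => [r| |] //; first by exists r.
have bnd x : S x -> `|x - s0| <= r.
  by move=> Sx; rewrite -lee_fin -hr; apply: mem.
have hsup : has_sup S.
  split; first by exists s0.
  exists (s0 + r) => x Sx; have := bnd x Sx; rewrite ler_norml; lra.
have hinf : has_inf S.
  split; first by exists s0.
  exists (s0 - r) => x Sx; have := bnd x Sx; rewrite ler_norml; lra.
have lb := ge_inf (proj2 hinf).
have ub := sup_upper_bound hsup.
have Sa : S (inf S).
  apply: supp_closed => B /nbhs_ballP [e /= e0 hB].
  have [s Ss hs] := inf_adherent e0 hinf.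
  exists s; split => //; apply: hB.
  rewrite -ball_normE /= ler0_norm; last by rewrite subr_le0; apply: lb.
  have := lb s Ss; lra.
have Sb : S (sup S).
  apply: supp_closed => B /nbhs_ballP [e /= e0 hB].
  have [s Ss hs] := sup_adherent e0 hsup.
  exists s; split => //; apply: hB.
  rewrite -ball_normE /= ger0_norm; last by rewrite subr_ge0; apply: ub.
  have := ub s Ss; lra.
have bds x : S x -> inf S <= x <= sup S by move=> Sx; rewrite lb // ub.
exists (inf S), (sup S); split => //.
apply/le_anti/andP; split.
  apply: ge_ereal_sup => _ [x Sx [y Sy <-]]; rewrite lee_fin ler_norml.
  by have := bds x Sx; have := bds y Sy; lra.
have := mem _ _ Sb Sa; rewrite ger0_norm // subr_ge0.
by have := bds _ Sb; lra.
Qed.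
Lemma real_core (R : realType) (S : set R) (f : R -> R) (a b c d : R) :
  S a -> S b -> (forall x, S x -> a <= x <= b) ->
  (forall x, S x -> c <= f x <= d) -> b - a = d - c ->
  (forall x y, S x -> S y -> `|f x - f y| <= `|x - y|) ->
  (forall e, 0 < e -> exists z, S z /\ f z < c + e) ->
  (forall e, 0 < e -> exists z, S z /\ d - e < f z) ->
  (forall z, S z -> f z = z + (c - a)) \/ (forall z, S z -> f z = - z + (d + a)).
Proof.
move=> Sa Sb bS bf D lip apc apd.
have lipP x y : S x -> S y -> y <= x -> f x - f y <= x - y /\ f y - f x <= x - y.
  move=> Sx Sy yx; have := lip x y Sx Sy.
  rewrite (ger0_norm (x := x - y)); last by rewrite subr_ge0.
  by move/ler_normlP => [h1 h2]; split; lra.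
have key e : 0 < e -> (f a < c + 3 * e /\ d - 3 * e < f b) \/
                      (d - 3 * e < f a /\ f b < c + 3 * e).
  move=> e0; have [z [Sz hz]] := apc e e0; have [w [Sw hw]] := apd e e0.
  have := bS z Sz; have := bS w Sw; have := bf z Sz; have := bf w Sw.
  have := bf a Sa; have := bf b Sb.
  case: (lerP z w) => zw.
    have := lipP w z Sw Sz zw; have := lipP z a Sz Sa (proj1 (andP (bS z Sz))).
    have := lipP b w Sb Sw (proj2 (andP (bS w Sw))).
    move=> [? ?] [? ?] [? ?] /andP[? ?] /andP[? ?] /andP[? ?] /andP[? ?] /andP[? ?] /andP[? ?].
    left; split; lra.
  have wz := ltW zw.
  have := lipP z w Sz Sw wz; have := lipP w a Sw Sa (proj1 (andP (bS w Sw))).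
  have := lipP b z Sb Sz (proj2 (andP (bS z Sz))).
  move=> [? ?] [? ?] [? ?] /andP[? ?] /andP[? ?] /andP[? ?] /andP[? ?] /andP[? ?] /andP[? ?].
  right; split; lra.
have /andP[ca ad] := bf a Sa; have /andP[cb bd] := bf b Sb.
have /andP[ab _] := bS b Sb.
case: (boolP ((0 < (f a - c) + (d - f b)) && (0 < (d - f a) + (f b - c)))).
  move=> /andP[h1 h2]; exfalso.
  set m := Num.min ((f a - c) + (d - f b)) ((d - f a) + (f b - c)).
  have m0 : 0 < m by rewrite lt_min h1 h2.
  have [m1 m2] : m <= (f a - c) + (d - f b) /\ m <= (d - f a) + (f b - c).
    by split; rewrite ge_min lexx ?orbT.
  have e0 : 0 < m / 6 by rewrite divr_gt0.
  have hm : 6 * (m / 6) = m by field.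
  case: (key _ e0) => -[? ?]; lra.
rewrite negb_and -!leNgt => /orP[h|h].
  left => z Sz.
  have /andP[az zb] := bS z Sz.
  have [? ?] := lipP z a Sz Sa az; have [? ?] := lipP b z Sb Sz zb; lra.
right => z Sz.
have /andP[az zb] := bS z Sz.
have [? ?] := lipP z a Sz Sa az; have [? ?] := lipP b z Sb Sz zb; lra.
Qed.

Lemma affc (R : realType) (s t : R) : continuous (fun x : R => s * (x - t)).
Proof.
move=> x.
apply: cvgM; [exact: cvg_cst | apply: cvgB; [exact: cvg_id|exact: cvg_cst]].
Qed.

Lemma transfer (R : realType) (mu nu : probability R R) (f : R -> R) (s t : R) :
  (forall x, supp nu x -> supp mu (f x)) -> pushes_on f nu mu ->
  nu (supp nu) = 1%E -> mu (supp mu) = 1%E ->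
  (s = 1 \/ s = -1) -> (forall z, supp nu z -> f z = s * z + t) ->
  mm_isomorphic mu nu.
Proof.
move=> fS fP nu1 mu1 hs hf.
set g := fun x : R => s * (x - t).
have ss : s * s = 1 by case: hs => ->; [rewrite mulr1 | rewrite mulrNN mulr1].
have gf z : supp nu z -> g (f z) = z.
  by move=> Sz; rewrite /g hf // addrK mulrA ss mul1r.
have gP : pushes_on g mu nu.
  move=> A mA.
  have mgA : measurable (supp mu `&` g @^-1` A).
    apply: measurableI; first exact: supp_meas.
    rewrite -[_ @^-1` _]setTI; exact: (continuous_measurable_fun (@affc R s t) measurableT mA).
  split => //.
  have [_ <-] := fP _ mgA.
  have -> : supp nu `&` f @^-1` (supp mu `&` g @^-1` A) = supp nu `&` A.
    apply/seteqP; split => z [Sz hz]; split => //.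
      by case: hz; rewrite /preimage /= gf.
    by split; [apply: fS | rewrite /preimage /= gf].
  by apply: full_meas => //; exact: supp_meas.
exists g; split.
- move=> x Sx U oU Ugx.
  have oV : open (g @^-1` U) by exact: (proj1 (continuousP _) (@affc R s t)).
  have := Sx _ oV Ugx.
  rewrite -(full_meas (supp_meas mu) mu1 (open_measurable oV)).
  by have [_ ->] := gP _ (open_measurable oU).
- move=> x y _ _; rewrite /g.
  have -> : s * (x - t) - s * (y - t) = s * (x - y) by ring.
  by rewrite normrM; case: hs => ->; rewrite ?normrN normr1 mul1r.
- exact: gP.
Qed.

Theorem lemma4p1 (R : realType) (mu nu : probability R R) :
  diam (supp mu) = diam (supp nu) ->
  (diam (supp mu) < +oo)%E ->
  dominated mu nu ->
  mm_isomorphic mu nu.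
Proof.
move=> hD hfin [f [fS fL fP]].
have nu1 : nu (supp nu) = 1%E.
  have [_ h] := fP _ measurableT.
  by rewrite preimage_setT setIT probability_setT in h.
have mu1 : mu (supp mu) = 1%E.
  have [_ h] := fP _ (supp_meas mu).
  have e : supp nu `&` f @^-1` supp mu = supp nu.
    by apply/seteqP; split => z; [case|move=> Sz; split => //; apply: fS].
  by rewrite e nu1 in h.
have [c [d [Sc Sd bc hc]]] := ext_supp hfin mu1.
have hfin2 : (diam (supp nu) < +oo)%E by rewrite -hD.
have [a [b [Sa Sb ba hb]]] := ext_supp hfin2 nu1.
have D : b - a = d - c by move: hD; rewrite hc hb => -[].
have apx x e : supp mu x -> 0 < e -> exists z, supp nu z /\ `|x - f z| < e.
  move=> Sx e0.
  have pos := Sx _ (ball_open x e) (ballxx x e0).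
  have [_ h] := fP _ (open_measurable (ball_open x e)).
  rewrite -h in pos.
  case: (pselect (exists z, (supp nu `&` f @^-1` ball x e) z)).
    by move=> [z [Sz hz]]; exists z; split => //; rewrite -ball_normE in hz.
  move=> nz; exfalso.
  have e0' : supp nu `&` f @^-1` ball x e = set0.
    by apply/seteqP; split => z // hz; apply: nz; exists z.
  by move: pos; rewrite e0' measure0 ltxx.
have bf x : supp nu x -> c <= f x <= d by move=> Sx; apply: bc; apply: fS.
have apc e : 0 < e -> exists z, supp nu z /\ f z < c + e.
  move=> e0; have [z [Sz hz]] := apx c e Sc e0; exists z; split => //.
  by move: hz; rewrite ltr_norml => /andP[? ?]; lra.
have apd e : 0 < e -> exists z, supp nu z /\ d - e < f z.
  move=> e0; have [z [Sz hz]] := apx d e Sd e0; exists z; split => //.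
  by move: hz; rewrite ltr_norml => /andP[? ?]; lra.
case: (real_core Sa Sb ba bf D fL apc apd) => hf.
  apply: (transfer (s := 1) (t := c - a) fS fP nu1 mu1); first by left.
  by move=> z Sz; rewrite mul1r hf.
apply: (transfer (s := -1) (t := d + a) fS fP nu1 mu1); first by right.
by move=> z Sz; rewrite mulN1r hf.
Qed.
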